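(* Let $\lambda_0, \lambda_1$ be real numbers and $z = a + bi$ with $a \in \mathbb{R}$ and $b > 0$. Suppose $\lambda_0 \geq \max\{\lambda_1, |z|\}$. Then $\lambda_0, \lambda_1, z, \overline{z}$ are the eigenvalues of a $4 \times 4$ normal centrosymmetric nonnegative matrix if and only if $\lambda_0 + \lambda_1 - 2|a| \geq 0$ and $\lambda_0 - \lambda_1 - 2|b| \geq 0$.
   Context: $J$ is the $4 \times 4$ reverse identity matrix (ones on the anti-diagonal, zeros elsewhere). A matrix $Q$ is centrosymmetric if $JQJ = Q$, nonnegative if all entries are nonnegative, and normal if $QQ^* = Q^*Q$. *)

(* Defs.v *)
From HB Require Import structures.
From mathcomp Require Import all_boot all_order all_algebra.
From mathcomp Require Import complex.
From mathcomp Require Import reals.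
Set Implicit Arguments. Unset Strict Implicit. Unset Printing Implicit Defensive.
Import Order.TTheory GRing.Theory Num.Theory.
Local Open Scope ring_scope.
Local Open Scope complex_scope.

Definition revid {T : pzRingType} (n : nat) : 'M[T]_n :=
  \matrix_(i < n, j < n) ((i + j)%N == n.-1)%:R.

Definition adjmx {R : rcfType} (m n : nat) (A : 'M[R[i]]_(m, n)) : 'M[R[i]]_(n, m) :=
  (map_mx (@conjc R) A)^T.

Definition centrosymmetric {R : rcfType} (n : nat) (Q : 'M[R[i]]_n) : Prop :=
  revid n *m Q *m revid n = Q.

Definition nonneg_mx {R : rcfType} (m n : nat) (Q : 'M[R[i]]_(m, n)) : Prop :=
  forall i j, exists r : R, 0 <= r /\ Q i j = r%:C.

Definition normal_mx {R : rcfType} (n : nat) (Q : 'M[R[i]]_n) : Prop :=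
  Q *m adjmx Q = adjmx Q *m Q.

Definition has_spectrum {R : rcfType} (n : nat) (Q : 'M[R[i]]_n) (s : seq R[i]) : Prop :=
  char_poly Q = \prod_(x <- s) ('X - x%:P).

(* Main.v *)
Require Import Defs.
From HB Require Import structures.
From mathcomp Require Import all_boot all_order all_algebra.
From mathcomp Require Import complex.
From mathcomp Require Import reals.
Import Order.TTheory GRing.Theory Num.Theory.
Local Open Scope ring_scope.
Local Open Scope complex_scope.
From mathcomp Require Import ring lra.

Definition mk2 {T : Type} (a b c d : T) : 'M[T]_2 :=
  \matrix_(i < 2, j < 2) if (i : nat) == 0%N then (if (j : nat) == 0%N then a else b)
                         else (if (j : nat) == 0%N then c else d).

Lemma mx2_eta {T : Type} (A : 'M[T]_2) : A = mk2 (A 0 0) (A 0 1) (A 1 0) (A 1 1).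
Proof.
apply/matrixP => i j; rewrite mxE.
case: i => [[|[|//]] Hi]; case: j => [[|[|//]] Hj] /=; congr (A _ _); exact/val_inj.
Qed.

Lemma det_mk2 (F : comNzRingType) (a b c d : F) : \det (mk2 a b c d) = a * d - b * c.
Proof.
rewrite (expand_det_row _ 0) !big_ord_recr big_ord0 /= add0r /cofactor !det_mx11 !mxE /=.
rewrite expr0 expr1 !mul1r; ring.
Qed.

Lemma mulmx_mk2 (F : pzRingType) (a b c d a' b' c' d' : F) :
  mk2 a b c d *m mk2 a' b' c' d' = mk2 (a*a' + b*c') (a*b' + b*d') (c*a'+d*c') (c*b'+d*d').
Proof.
apply/matrixP => i j; rewrite !mxE !big_ord_recr big_ord0 /= add0r !mxE /=.
by case: i => [[|[|//]] Hi]; case: j => [[|[|//]] Hj].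
Qed.

Lemma addmx_mk2 (F : pzRingType) (a b c d a' b' c' d' : F) :
  mk2 a b c d + mk2 a' b' c' d' = mk2 (a+a') (b+b') (c+c') (d+d').
Proof.
apply/matrixP => i j; rewrite !mxE.
by case: i => [[|[|//]] Hi]; case: j => [[|[|//]] Hj].
Qed.

Lemma oppmx_mk2 (F : pzRingType) (a b c d : F) :
  - mk2 a b c d = mk2 (-a) (-b) (-c) (-d).
Proof.
apply/matrixP => i j; rewrite !mxE.
by case: i => [[|[|//]] Hi]; case: j => [[|[|//]] Hj].
Qed.

Lemma tr_mk2 {T : Type} (a b c d : T) : (mk2 a b c d)^T = mk2 a c b d.
Proof.
apply/matrixP => i j; rewrite !mxE.
by case: i => [[|[|//]] Hi]; case: j => [[|[|//]] Hj].
Qed.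

Lemma map_mk2 {T U : Type} (f : T -> U) (a b c d : T) :
  map_mx f (mk2 a b c d) = mk2 (f a) (f b) (f c) (f d).
Proof.
apply/matrixP => i j; rewrite !mxE.
by case: i => [[|[|//]] Hi]; case: j => [[|[|//]] Hj].
Qed.

Lemma revid2 (F : pzRingType) : revid 2 = mk2 0 1 1 (0 : F).
Proof.
apply/matrixP => i j; rewrite !mxE.
by case: i => [[|[|//]] Hi]; case: j => [[|[|//]] Hj].
Qed.

Lemma scalar_mk2 (F : pzRingType) (x : F) : x%:M = mk2 x 0 0 x.
Proof.
apply/matrixP => i j; rewrite !mxE.
by case: i => [[|[|//]] Hi]; case: j => [[|[|//]] Hj].
Qed.

Lemma JJ (F : pzRingType) : revid 2 *m revid 2 = 1 :> 'M[F]_2.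
Proof.
rewrite revid2 mulmx_mk2; apply/matrixP => i j; rewrite !mxE.
by case: i => [[|[|//]] Hi]; case: j => [[|[|//]] Hj] /=; rewrite ?(mul0r,mulr0,mul1r,add0r,addr0) ?mulr1n ?mulr0n.
Qed.

Lemma trJ (F : pzRingType) : (revid 2)^T = revid 2 :> 'M[F]_2.
Proof. by rewrite revid2 tr_mk2. Qed.

Lemma revid4 (F : pzRingType) : revid (2+2) = block_mx 0 (revid 2) (revid 2) 0 :> 'M[F]_(2+2).
Proof.
apply/matrixP => i j.
case: (split_ordP i) => i' ->; case: (split_ordP j) => j' ->;
rewrite ?block_mxEul ?block_mxEur ?block_mxEdl ?block_mxEdr !mxE /=;
by case: i' => [[|[|//]] Hi]; case: j' => [[|[|//]] Hj].
Qed.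

Lemma char_poly_mk2 (F : comNzRingType) (a b c d : F) :
  char_poly (mk2 a b c d) = 'X^2 - (a + d)%:P * 'X + (a * d - b * c)%:P.
Proof.
rewrite /char_poly /char_poly_mx map_mk2 scalar_mk2 oppmx_mk2 addmx_mk2 det_mk2.
rewrite !polyCD !polyCM !polyCN; ring.
Qed.

Section Block.
Context {F : numFieldType}.
Local Notation J := (revid 2 : 'M[F]_2).

Definition csQ (A B : 'M[F]_2) : 'M[F]_(2+2) := block_mx A B (J *m B *m J) (J *m A *m J).
Definition Pm : 'M[F]_(2+2) := block_mx 1 1 J (- J).
Definition Pm2 : 'M[F]_(2+2) := block_mx 1 J 1 (- J).

Lemma csQ_P (A B : 'M[F]_2) :
  csQ A B *m Pm = Pm *m block_mx (A + B *m J) 0 0 (A - B *m J).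
Proof.
rewrite /csQ /Pm !mulmx_block.
rewrite ?mulmx0 ?mul0mx ?mulmx1 ?mul1mx ?addr0 ?add0r.
congr block_mx.
- by rewrite mulmxN.
- by rewrite -!mulmxA JJ mulmx1 mulmxDr addrC.
- by rewrite -!mulmxA !mulmxN JJ mulmx1 mulNmx mulmxBr opprB addrC.
Qed.

Lemma Pm2P : Pm2 *m Pm = 2%:M.
Proof.
rewrite /Pm /Pm2 mulmx_block (scalar_mx_block 2 2).
rewrite !mulmx1 ?mulmxN ?mulNmx ?opprK JJ ?subrr.
by congr block_mx; apply/matrixP => i j; rewrite !mxE; case: (i == j); rewrite ?mulr1n ?mulr0n ?addr0.
Qed.


Lemma csQ_char (A B : 'M[F]_2) :
  char_poly (csQ A B) = char_poly (A + B *m J) * char_poly (A - B *m J).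
Proof.
set D := block_mx (A + B *m J) 0 0 (A - B *m J).
have eq1 : char_poly_mx (csQ A B) *m map_mx polyC Pm = map_mx polyC Pm *m char_poly_mx D.
  by rewrite /char_poly_mx mulmxBl mulmxBr mul_scalar_mx mul_mx_scalar -!map_mxM csQ_P.
have dP : \det Pm != 0.
  apply/negP => /eqP h; have := congr1 determinant Pm2P.
  rewrite det_mulmx h mulr0 det_scalar => /eqP.
  by rewrite eq_sym expf_eq0 pnatr_eq0.
have := congr1 determinant eq1; rewrite !det_mulmx det_map_mx [X in _ = X]mulrC.
rewrite {1}/char_poly; move/mulIf => -> ; last by rewrite polyC_eq0.
rewrite /char_poly /D /char_poly_mx map_block_mx (scalar_mx_block 2 2).
rewrite opp_block_mx add_block_mx !raddf0 ?oppr0 ?addr0 ?subr0 det_ublock //.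
Qed.

Lemma centro_cs (Q : 'M[F]_(2+2)) :
  revid (2+2) *m Q *m revid (2+2) = Q -> Q = csQ (ulsubmx Q) (ursubmx Q).
Proof.
move=> h; have hQ := submxK Q.
move: h; rewrite -hQ revid4 !mulmx_block.
rewrite ?mulmx0 ?mul0mx ?addr0 ?add0r ?mulmx1 ?mul1mx.
move/eq_block_mx => [h1 h2 h3 h4].
by rewrite /csQ block_mxKul block_mxKur -h3 -h4.
Qed.

Lemma cs_centro (A B : 'M[F]_2) : revid (2+2) *m csQ A B *m revid (2+2) = csQ A B.
Proof.
rewrite /csQ revid4 !mulmx_block.
rewrite ?mulmx0 ?mul0mx ?addr0 ?add0r ?mulmx1 ?mul1mx.
by rewrite -!mulmxA !JJ !mulmx1 !mulmxA !JJ !mul1mx.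
Qed.
End Block.

Lemma mk2_inj {T : Type} {a b c d a' b' c' d' : T} :
  mk2 a b c d = mk2 a' b' c' d' -> [/\ a = a', b = b', c = c' & d = d'].
Proof.
move=> h; split.
- by have := congr1 (fun M : 'M[T]_2 => M ord0 ord0) h; rewrite !mxE.
- by have := congr1 (fun M : 'M[T]_2 => M ord0 ord_max) h; rewrite !mxE.
- by have := congr1 (fun M : 'M[T]_2 => M ord_max ord0) h; rewrite !mxE.
- by have := congr1 (fun M : 'M[T]_2 => M ord_max ord_max) h; rewrite !mxE.
Qed.

Lemma csQ_mk2 (F : numFieldType) (a00 a01 a10 a11 b00 b01 b10 b11 : F) :
  csQ (mk2 a00 a01 a10 a11) (mk2 b00 b01 b10 b11) =
  block_mx (mk2 a00 a01 a10 a11) (mk2 b00 b01 b10 b11) (mk2 b11 b10 b01 b00) (mk2 a11 a10 a01 a00).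
Proof.
rewrite /csQ revid2 !mulmx_mk2; congr block_mx; congr mk2; ring.
Qed.

Lemma csQ_normal (R : realFieldType) (a00 a01 a10 a11 b00 b01 b10 b11 : R) :
  let Q := csQ (mk2 a00 a01 a10 a11) (mk2 b00 b01 b10 b11) in
  Q *m Q^T = Q^T *m Q ->
  (a01 + b00)^+2 = (a10 + b11)^+2 /\ ((a00 - b01) - (a11 - b10)) * ((a10 - b11) - (a01 - b00)) = 0.
Proof.
rewrite /= csQ_mk2 tr_block_mx !tr_mk2 !mulmx_block !mulmx_mk2 !addmx_mk2.
move=> h.
have h1 := congr1 ulsubmx h; have h2 := congr1 ursubmx h.
have h3 := congr1 dlsubmx h; have h4 := congr1 drsubmx h.
rewrite !block_mxKul in h1; rewrite !block_mxKur in h2.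
rewrite !block_mxKdl in h3; rewrite !block_mxKdr in h4.
have [e1 e2 e3 e4] := mk2_inj h1. have [f1 f2 f3 f4] := mk2_inj h2.
have [g1 g2 g3 g4] := mk2_inj h3. have [k1 k2 k3 k4] := mk2_inj h4.
split; nra.
Qed.

Lemma quad_root (R : rcfType) (t d a b : R) :
  (a +i* b) ^+ 2 - t%:C * (a +i* b) + d%:C = 0 ->
  t * b = 2 * a * b /\ a ^+ 2 - b ^+ 2 - t * a + d = 0.
Proof.
rewrite expr2; simpc. move/eqP; rewrite eq_complex /= => /andP [/eqP h1 /eqP h2].
split; nra.
Qed.

Lemma map_quad (R : rcfType) (c d : R) :
  map_poly (real_complex R) ('X^2 - c%:P * 'X + d%:P) = 'X^2 - (c%:C)%:P * 'X + (d%:C)%:P.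
Proof. by rewrite raddfD raddfB /= map_polyXn rmorphM /= map_polyX !map_polyC. Qed.

Lemma map_lin (R : rcfType) (c : R) :
  map_poly (real_complex R) ('X - c%:P) = 'X - (c%:C)%:P.
Proof. by rewrite rmorphB /= map_polyX !map_polyC. Qed.

Lemma prod_eq (R : rcfType) (l0 l1 a b : R) :
  \prod_(x <- [:: l0%:C; l1%:C; a +i* b; a -i* b]) ('X - x%:P) =
  map_poly (real_complex R) (('X - l0%:P) * ('X - l1%:P) *
     ('X^2 - (2 * a)%:P * 'X + (a ^+ 2 + b ^+ 2)%:P)).
Proof.
have e1 : (a +i* b) + (a -i* b) = (2 * a)%:C by simpc; congr (_ +i* _); ring.
have e2 : (a +i* b) * (a -i* b) = (a ^+ 2 + b ^+ 2)%:C by simpc; congr (_ +i* _); ring.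
rewrite 2!rmorphM /= map_quad !map_lin -e1 -e2.
rewrite !big_cons big_nil mulr1 !polyCD !polyCM; ring.
Qed.

Lemma Hz (R : rcfType) (a b : R) :
  (a +i* b) ^+ 2 - (2 * a)%:C * (a +i* b) + (a ^+ 2 + b ^+ 2)%:C = 0.
Proof. rewrite expr2; simpc; congr (_ +i* _); ring. Qed.

Lemma core2 (R : rcfType) (l0 l1 a b tM dM tN dN : R) :
  0 < b -> 0 <= tM ^+ 2 - 4 * dM ->
  ('X^2 - tM%:P * 'X + dM%:P) * ('X^2 - tN%:P * 'X + dN%:P) =
  ('X - l0%:P) * ('X - l1%:P) * ('X^2 - (2 * a)%:P * 'X + (a ^+ 2 + b ^+ 2)%:P) ->
  [/\ tN = 2 * a, dN = a ^+ 2 + b ^+ 2, tM = l0 + l1 & dM = l0 * l1].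
Proof.
move=> hb hdisc hcp.
have hz := congr1 (fun p => (map_poly (real_complex R) p).[a +i* b]) hcp.
move: hz => /=; rewrite rmorphM /= rmorphM /= rmorphM /= !map_quad !map_lin.
rewrite !hornerE Hz mulr0 => /eqP; rewrite mulf_eq0 => /orP [] /eqP /quad_root [h1 h2].
- have e : tM = 2 * a.
    by apply: (mulIf (lt0r_neq0 hb)); rewrite h1.
  exfalso; nra.
- have e1 : tN = 2 * a.
    by apply: (mulIf (lt0r_neq0 hb)); rewrite h1.
  have e2 : dN = a ^+ 2 + b ^+ 2 by rewrite e1 in h2; nra.
  move: hcp; rewrite e1 e2 => /mulIf hcp.
  have hH : ('X^2 - (2 * a)%:P * 'X + (a ^+ 2 + b ^+ 2)%:P : {poly R}) != 0.
    apply/negP => /eqP h; have := congr1 (fun p => p.[a]) h; rewrite !hornerE /=.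
    move/eqP; rewrite -subr_eq0 subr0; apply/negP; rewrite gt_eqF //; nra.
  move: (hcp hH) => hc.
  have h0 := congr1 (fun p => p.[0]) hc; have h1' := congr1 (fun p => p.[1]) hc.
  move: h0 h1' => /=; rewrite !hornerE => h0 h1'.
  split => //; nra.
Qed.

Lemma csQ_char_mk2 (F : numFieldType) (a00 a01 a10 a11 b00 b01 b10 b11 : F) :
  char_poly (csQ (mk2 a00 a01 a10 a11) (mk2 b00 b01 b10 b11)) =
  ('X^2 - ((a00 + b01) + (a11 + b10))%:P * 'X
      + ((a00 + b01) * (a11 + b10) - (a01 + b00) * (a10 + b11))%:P) *
  ('X^2 - ((a00 - b01) + (a11 - b10))%:P * 'X
      + ((a00 - b01) * (a11 - b10) - (a01 - b00) * (a10 - b11))%:P).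
Proof.
rewrite csQ_char.
have -> : mk2 a00 a01 a10 a11 + mk2 b00 b01 b10 b11 *m revid 2 =
          mk2 (a00 + b01) (a01 + b00) (a10 + b11) (a11 + b10).
  by rewrite revid2 mulmx_mk2 addmx_mk2; congr mk2; ring.
have -> : mk2 a00 a01 a10 a11 - mk2 b00 b01 b10 b11 *m revid 2 =
          mk2 (a00 - b01) (a01 - b00) (a10 - b11) (a11 - b10).
  by rewrite revid2 mulmx_mk2 oppmx_mk2 addmx_mk2; congr mk2; ring.
by rewrite !char_poly_mk2.
Qed.

Lemma mk2_ge0 (R : realDomainType) (a b c d : R) :
  0 <= a -> 0 <= b -> 0 <= c -> 0 <= d -> forall i j, 0 <= mk2 a b c d i j.
Proof.
move=> ha hb hc hd i j; rewrite mxE.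
by case: i => [[|[|//]] Hi]; case: j => [[|[|//]] Hj].
Qed.

Lemma csQ_ge0 (R : realFieldType) (a00 a01 a10 a11 b00 b01 b10 b11 : R) :
  0 <= a00 -> 0 <= a01 -> 0 <= a10 -> 0 <= a11 ->
  0 <= b00 -> 0 <= b01 -> 0 <= b10 -> 0 <= b11 ->
  forall i j, 0 <= csQ (mk2 a00 a01 a10 a11) (mk2 b00 b01 b10 b11) i j.
Proof.
move=> h1 h2 h3 h4 h5 h6 h7 h8 i j; rewrite csQ_mk2.
case: (split_ordP i) => i' ->; case: (split_ordP j) => j' ->;
rewrite ?block_mxEul ?block_mxEur ?block_mxEdl ?block_mxEdr; exact: mk2_ge0.
Qed.

Lemma map_revid (R : rcfType) n :
  map_mx (real_complex R) (revid n) = revid n.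
Proof. by apply/matrixP => i j; rewrite !mxE rmorph_nat. Qed.

Lemma adj_real (R : rcfType) m n (X : 'M[R]_(m, n)) :
  adjmx (map_mx (real_complex R) X) = map_mx (real_complex R) X^T.
Proof. by apply/matrixP => i j; rewrite !mxE conjc_real. Qed.

Theorem theorem3p2 (R : realType) (l0 l1 a b : R) :
  0 < b ->
  Num.max l1 (Num.sqrt (a ^+ 2 + b ^+ 2)) <= l0 ->
  ((exists Q : 'M[R[i]]_4,
       nonneg_mx Q /\ normal_mx Q /\ centrosymmetric Q /\
       has_spectrum Q [:: l0%:C; l1%:C; a +i* b; a -i* b])
   <->
   (0 <= l0 + l1 - 2 * `|a| /\ 0 <= l0 - l1 - 2 * `|b|)).
Proof.
move=> hb; rewrite ge_max => /andP [hl _].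
rewrite (gtr0_norm hb).
split.
- case=> Q [hnn [hnorm [hcs hsp]]].
  pose Qr : 'M[R]_(2+2) := map_mx (@complex.Re R) Q.
  have hQ : Q = map_mx (real_complex R) Qr.
    by apply/matrixP => i j; rewrite !mxE; have [r [_ ->]] := hnn i j.
  have hge : forall i j, 0 <= Qr i j.
    by move=> i j; rewrite mxE; have [r [hr ->]] := hnn i j.
  have hcsr : revid (2+2) *m Qr *m revid (2+2) = Qr.
    apply: (@map_mx_inj _ _ (real_complex R)).
    by rewrite !map_mxM map_revid -hQ.
  have hnr : Qr *m Qr^T = Qr^T *m Qr.
    apply: (@map_mx_inj _ _ (real_complex R)).
    by rewrite !map_mxM -adj_real -hQ.
  have hcpr : char_poly Qr = ('X - l0%:P) * ('X - l1%:P) *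
                 ('X^2 - (2 * a)%:P * 'X + (a ^+ 2 + b ^+ 2)%:P).
    apply: (@map_poly_inj _ _ (real_complex R)).
    by rewrite map_char_poly -hQ -prod_eq.
  have E := centro_cs Qr hcsr.
  have gA : forall i j, 0 <= ulsubmx Qr i j.
    by move=> i j; have := hge (lshift 2 i) (lshift 2 j); rewrite !mxE.
  have gB : forall i j, 0 <= ursubmx Qr i j.
    by move=> i j; have := hge (lshift 2 i) (rshift 2 j); rewrite !mxE.
  move: E gA gB; set A := ulsubmx Qr; set B := ursubmx Qr.
  rewrite (mx2_eta A) (mx2_eta B) => E gA gB.
  move: (gA 0 0) (gA 0 1) (gA 1 0) (gA 1 1) (gB 0 0) (gB 0 1) (gB 1 0) (gB 1 1).
  move: hnr hcpr; rewrite E.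
  move: (A 0 0) (A 0 1) (A 1 0) (A 1 1) (B 0 0) (B 0 1) (B 1 0) (B 1 1).
  move=> a00 a01 a10 a11 b00 b01 b10 b11 hnr hcpr g1 g2 g3 g4 g5 g6 g7 g8.
  move: g1 g2 g3 g4 g5 g6 g7 g8; rewrite !mxE /= => g1 g2 g3 g4 g5 g6 g7 g8.
  have [n1 n2] := @csQ_normal R a00 a01 a10 a11 b00 b01 b10 b11 hnr.
  rewrite csQ_char_mk2 in hcpr.
  have [|e1 e2 e3 e4] := @core2 _ _ _ _ _ _ _ _ _ hb _ hcpr.
    have := sqr_ge0 ((a00 + b01) - (a11 + b10)).
    have := mulr_ge0 (addr_ge0 g2 g5) (addr_ge0 g3 g8); nra.
  have hm : a01 + b00 = a10 + b11.
    move/eqP: n1; rewrite eqf_sqr => /orP [/eqP //| /eqP h]; lra.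
  have hP : (a01 - b00) * (a10 - b11) <= - b ^+ 2.
    have := sqr_ge0 ((a00 - b01) - (a11 - b10)); nra.
  have huv : a00 - b01 = a11 - b10.
    move/eqP: n2; rewrite mulf_eq0 => /orP [/eqP h| /eqP h]; first lra.
    have : a10 - b11 = a01 - b00 by lra.
    move=> h'; rewrite h' in hP; have := sqr_ge0 (a01 - b00); nra.
  have ha : a00 - b01 = a by lra.
  have hP' : (a01 - b00) * (a10 - b11) = - b ^+ 2 by nra.
  have hmb : b <= a01 + b00.
    have hm2 : b ^+ 2 <= (a01 + b00) ^+ 2.
      case: (lerP 0 (a01 - b00)) => h1; nra.
    nra.
  split.
  - case: (lerP 0 a) => h; [rewrite ger0_norm // | rewrite ltr0_norm //]; lra.
  - have hd : (l0 - l1) ^+ 2 >= 4 * b ^+ 2.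
      have := sqr_ge0 ((a00 + b01) - (a11 + b10)); nra.
    nra.
- move=> [h1 h2].
  pose p := (l0 + l1) / 2; pose q := (l0 - l1) / 2.
  pose al := (p + a) / 2; pose be := (q + b) / 2.
  pose ga := (q - b) / 2; pose de := (p - a) / 2.
  have hap : `|a| <= p by rewrite /p; lra.
  have hbq : b <= q by rewrite /q; lra.
  have hal : 0 <= al.
    rewrite /al; case: (lerP 0 a) => h; [rewrite ger0_norm // in hap | rewrite ltr0_norm // in hap]; lra.
  have hde : 0 <= de.
    rewrite /de; case: (lerP 0 a) => h; [rewrite ger0_norm // in hap | rewrite ltr0_norm // in hap]; lra.
  have hbe : 0 <= be by rewrite /be; lra.
  have hga : 0 <= ga by rewrite /ga; lra.
  pose Qr := csQ (mk2 al be ga al) (mk2 ga de de be).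
  exists (map_mx (real_complex R) Qr); split; [|split; [|split]].
  + move=> i j; exists (Qr i j); split; last by rewrite mxE.
    exact: csQ_ge0.
  + rewrite /normal_mx adj_real -!map_mxM; congr map_mx.
    have hn : forall x y z w : R,
        let Q := csQ (mk2 x y z x) (mk2 z w w y) in Q *m Q^T = Q^T *m Q.
      move=> x y z w /=.
      rewrite csQ_mk2 tr_block_mx !tr_mk2 !mulmx_block !mulmx_mk2 !addmx_mk2.
      by congr block_mx; congr mk2; ring.
    exact: hn.
  + rewrite /centrosymmetric -(map_revid R 4) -!map_mxM; congr map_mx.
    exact: cs_centro.
  + rewrite /has_spectrum -map_char_poly prod_eq; congr map_poly.
    rewrite /Qr csQ_char_mk2.
    have -> : al + de + (al + de) = l0 + l1 by rewrite /al /de /p; field.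
    have -> : (al + de) * (al + de) - (be + ga) * (ga + be) = l0 * l1
      by rewrite /al /de /p /be /ga /q; field.
    have -> : al - de + (al - de) = 2 * a by rewrite /al /de /p; field.
    have -> : (al - de) * (al - de) - (be - ga) * (ga - be) = a ^+ 2 + b ^+ 2
      by rewrite /al /de /p /be /ga /q; field.
    rewrite !polyCD !polyCM; ring.
Qed.
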